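(* For all $W,L\in\mathbb N$ and $K>0$, $$\mathcal{SNN}(W,L,K)\subset\mathcal{NN}(W,L,K)\subset\mathcal{SNN}(W+1,L,K).$$
   Context: A neural network of depth $L$ is $\phi=\ell_L\circ\sigma_{L-1}\circ\ell_{L-1}\circ\cdots\circ\sigma_0\circ\ell_0$ with $\ell_i(u)=A_iu+b_i$, $A_i\in\mathbb R^{n_i\times m_i}$, $b_i\in\mathbb R^{n_i}$, $m_{i+1}=n_i$, and componentwise activation functions $\sigma_i$; width $W=\max_i n_i$. Standing convention: the activation functions satisfy $\sigma_\ell(1)=1$. With $\|A\|=\max_i\sum_j|a_{ij}|$ and $\|(A,b)\|$ the norm of the augmented matrix $[A\ b]$, $\mathcal{NN}(W,L,K)$ denotes the networks of width $W$ and depth $L$ (with fixed input and output dimensions) for which there is $I\subset\{0,\dots,L\}$ with $\|(A_\ell,b_\ell)\|\le1$ for $\ell\notin I$, $\|(A_\ell,b_\ell)\|\ge1$ for $\ell\in I$, and $\prod_{\ell\in I}\|(A_\ell,b_\ell)\|\le K$. $\mathcal{SNN}(W,L,K)$ is the subset of bias-free such networks, i.e. those with all $b_\ell=0$. *)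

(* Defs.v *)
From HB Require Import structures.
From mathcomp Require Import all_boot all_order all_algebra.
From mathcomp Require Import reals.
Set Implicit Arguments. Unset Strict Implicit. Unset Printing Implicit Defensive.
Import Order.TTheory GRing.Theory Num.Theory.
Local Open Scope ring_scope.

Section Nets.
Variable R : realType.

(* A network with input dimension m and output dimension n.
   [Out A b] is a single affine layer u |-> A u + b (the last layer ell_L);
   [Layer A b rest] is  rest o sigma o (u |-> A u + b). *)
Inductive net : nat -> nat -> Type :=
| Out (m n : nat) (A : 'M[R]_(n, m)) (b : 'cV[R]_n) : net m n
| Layer (m k n : nat) (A : 'M[R]_(k, m)) (b : 'cV[R]_k) (rest : net k n) : net m n.

(* depth L = number of affine layers minus one *)
Fixpoint depth m n (N : net m n) : nat :=
  match N with Out _ _ _ _ => 0%N | Layer _ _ _ _ _ r => (depth r).+1 end.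

Fixpoint width m n (N : net m n) : nat :=
  match N with Out _ n _ _ => n | Layer _ k _ _ _ r => maxn k (width r) end.

Definition augnorm m n (A : 'M[R]_(n, m)) (b : 'cV[R]_n) : R :=
  \big[Num.max/0]_(i < n) (\sum_(j < m) `|A i j| + `|b i ord0|).

Fixpoint norms m n (N : net m n) : seq R :=
  match N with
  | Out _ _ A b => [:: augnorm A b]
  | Layer _ _ _ A b r => augnorm A b :: norms r
  end.

Definition lnorm m n (N : net m n) (l : nat) : R := nth 0 (norms N) l.

Fixpoint biasfree m n (N : net m n) : Prop :=
  match N with
  | Out _ _ _ b => b = 0
  | Layer _ _ _ _ b r => b = 0 /\ biasfree r
  end.

Fixpoint realize_from (sigma : nat -> R -> R) (l : nat) m n (N : net m n)
  : 'cV[R]_m -> 'cV[R]_n :=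
  match N in net m n return 'cV[R]_m -> 'cV[R]_n with
  | Out _ _ A b => fun u => A *m u + b
  | Layer _ _ _ A b r =>
      fun u => realize_from sigma l.+1 r (map_mx (sigma l) (A *m u + b))
  end.

Definition realize (sigma : nat -> R -> R) m n (N : net m n) := realize_from sigma 0 N.

Definition in_NN (W L : nat) (K : R) m n (N : net m n) : Prop :=
  (width N <= W)%N /\ depth N = L /\
  exists I : {set 'I_L.+1},
    (forall l : 'I_L.+1, l \notin I -> lnorm N l <= 1) /\
    (forall l : 'I_L.+1, l \in I -> 1 <= lnorm N l) /\
    \prod_(l in I) lnorm N l <= K.

Definition in_SNN (W L : nat) (K : R) m n (N : net m n) : Prop :=
  in_NN W L K N /\ biasfree N.

End Nets.

(* Main.v *)
Require Import Defs.
From HB Require Import structures.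
From mathcomp Require Import all_boot all_order all_algebra.
From mathcomp Require Import reals.
Import Order.TTheory GRing.Theory Num.Theory.
Local Open Scope ring_scope.

Section Lift.
Variable R : realType.

Fixpoint liftN m n (N : net R m n) : net R (m + 1) n :=
  match N in net _ m n return net R (m + 1) n with
  | Out m n A b => Out (row_mx A b) 0
  | Layer m k n A b r => @Layer R (m + 1) (k + 1) n (block_mx A b 0 1%:M) 0 (liftN _ _ r)
  end.
Arguments liftN {m n}.

Lemma realize_lift (sigma : nat -> R -> R) (sigma1 : forall l, sigma l 1 = 1)
  m n (N : net R m n) l u :
  realize_from sigma l (liftN N) (col_mx u 1%:M) = realize_from sigma l N u.
Proof.
elim: N l u => [m' n' A b | m' k n' A b r IH] l u /=.
  by rewrite mul_row_col mulmx1 addr0.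
rewrite mul_block_col mul0mx add0r !mulmx1 addr0 map_col_mx.
have -> : map_mx (sigma l) (1%:M : 'M[R]_1) = 1%:M.
  apply/matrixP => i j; rewrite !mxE !ord1 eqxx /=.
  by rewrite sigma1.
by rewrite IH.
Qed.

Lemma biasfree_lift m n (N : net R m n) : biasfree (liftN N).
Proof. by elim: N => //= m' k n' A b r IH; split. Qed.

Lemma depth_lift m n (N : net R m n) : depth (liftN N) = depth N.
Proof. by elim: N => //= m' k n' A b r ->. Qed.

Lemma width_lift m n (N : net R m n) : (width (liftN N) <= (width N).+1)%N.
Proof.
elim: N => //= m' k n' A b r IH.
rewrite geq_max; apply/andP; split; first by rewrite addn1 ltnS leq_maxl.
by apply: (leq_trans IH); rewrite ltnS leq_maxr.
Qed.

Lemma augnorm_row m n (A : 'M[R]_(n, m)) (b : 'cV[R]_n) :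
  augnorm (row_mx A b) 0 = augnorm A b.
Proof.
rewrite /augnorm; apply: eq_bigr => i _.
rewrite big_split_ord /= big_ord1 row_mxEr.
have -> : (0 : 'cV[R]_n) i ord0 = 0 by rewrite mxE.
rewrite normr0 addr0; congr (_ + _).
by apply: eq_bigr => j _; rewrite row_mxEl.
Qed.

Lemma augnorm_block m k (A : 'M[R]_(k, m)) (b : 'cV[R]_k) :
  (augnorm A b <= 1 -> augnorm (block_mx A b 0 1%:M) 0 <= 1) /\
  (1 <= augnorm A b -> augnorm (block_mx A b 0 1%:M) 0 = augnorm A b).
Proof.
set M := block_mx A b 0 1%:M.
set G := fun i : 'I_(k + 1) => \sum_(j < m + 1) `|M i j| + `|(0 : 'cV[R]_(k+1)) i ord0|.
set F := fun i : 'I_k => \sum_(j < m) `|A i j| + `|b i ord0|.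
have GL : forall i, G (lshift 1 i) = F i.
  move=> i; rewrite /G /F.
  have -> : (0 : 'cV[R]_(k+1)) (lshift 1 i) ord0 = 0 by rewrite mxE.
  rewrite normr0 addr0 big_split_ord /= big_ord1.
  congr (_ + _); last by rewrite /M block_mxEur.
  by apply: eq_bigr => j _; rewrite /M block_mxEul.
have GR : forall i, G (rshift k i) = 1.
  move=> i; rewrite /G.
  have -> : (0 : 'cV[R]_(k+1)) (rshift k i) ord0 = 0 by rewrite mxE.
  rewrite normr0 addr0 big_split_ord /= big_ord1.
  rewrite /M block_mxEdr big1 ?add0r; last first.
    by move=> j _; rewrite block_mxEdl mxE normr0.
  by rewrite !ord1 mxE eqxx normr1.
have newE : augnorm M 0 = \big[Num.max/0]_(i < k + 1) G i by [].
have oldE : augnorm A b = \big[Num.max/0]_(i < k) F i by [].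
have splitI : forall (P : 'I_(k+1) -> Prop), (forall i, P (lshift 1 i)) ->
    (forall i, P (rshift k i)) -> forall i, P i.
  move=> P HL HR i; rewrite -(splitK i); case: (split i) => j /=; [exact: HL|exact: HR].
split => H.
  rewrite newE; apply: bigmax_le => // i _; move: i; apply: splitI => i.
    by rewrite GL; apply: le_trans H; rewrite oldE; apply: le_bigmax.
  by rewrite GR.
apply: le_anti; apply/andP; split.
  rewrite newE; apply: bigmax_le; first exact: le_trans H.
  move=> i _; move: i; apply: splitI => i.
    by rewrite GL oldE; apply: le_bigmax.
  by rewrite GR.
rewrite oldE; apply: bigmax_le.
  by rewrite newE; apply: le_trans (le_bigmax _ G (rshift k ord0)); rewrite GR.
by move=> i _; rewrite -GL newE; apply: le_bigmax.
Qed.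

Lemma lnorm_lift m n (N : net R m n) l :
  (lnorm N l <= 1 -> lnorm (liftN N) l <= 1) /\
  (1 <= lnorm N l -> lnorm (liftN N) l = lnorm N l).
Proof.
elim: N l => [m' n' A b | m' k n' A b r IH] [|l]; rewrite /lnorm /=.
- by rewrite augnorm_row.
- by rewrite !nth_nil.
- exact: augnorm_block.
- exact: IH.
Qed.

End Lift.
Arguments liftN {R m n}.

Theorem proposition1 (R : realType) (sigma : nat -> R -> R)
  (sigma1 : forall l : nat, sigma l 1 = 1)
  (d k W L : nat) (K : R) (HK : 0 < K) :
  (forall N : net R d k, in_SNN W L K N -> in_NN W L K N) /\
  (forall N : net R d k, in_NN W L K N ->
     exists N' : net R (d + 1) k,
       in_SNN W.+1 L K N' /\
       forall x : 'cV[R]_d, realize sigma N' (col_mx x 1%:M) = realize sigma N x).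
Proof.
split; first by move=> N [].
move=> N [HW [HL [I [H1 [H2 H3]]]]].
exists (liftN N); split; last by move=> x; apply: realize_lift.
split; last exact: biasfree_lift.
split; first exact: leq_trans (@width_lift _ _ _ N) _.
split; first by rewrite depth_lift.
exists I; split; first by move=> l /H1; apply: (proj1 (@lnorm_lift _ _ _ N l)).
split; first by move=> l Hl; rewrite (proj2 (@lnorm_lift _ _ _ N l)) //; apply: H2.
apply: le_trans H3; rewrite le_eqVlt; apply/orP; left; apply/eqP.
apply: eq_bigr => l Hl.
by rewrite (proj2 (@lnorm_lift _ _ _ N l)) //; apply: H2.
Qed.
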